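(* Every element of $F_\tau$ can be written as a product $$a_{i_1}a_{i_2}\cdots a_{i_n}\,b_{j_m}^{-1}\cdots b_{j_2}^{-1}b_{j_1}^{-1}$$ with $n,m\ge0$, where each $a_{i_k}\in\{x_{i_k},y_{i_k}\}$ and each $b_{j_k}\in\{x_{j_k},y_{j_k}\}$, and $i_1\le i_2\le\dots\le i_n$, $j_1\le j_2\le\dots\le j_m$.
   Context: Let $\tau=(\sqrt5-1)/2$. $F_\tau$ is the group, under composition, of orientation-preserving piecewise linear homeomorphisms of $[0,1]$ with finitely many breakpoints, all in $\mathbb{Z}[\tau]$, and slopes integer powers of $\tau$; $gh$ means first $g$ then $h$. Trees: finite rooted binary trees whose carets are each labelled $x$-type or $y$-type; the root corresponds to $[0,1]$, and at a vertex with interval $[p,p+\tau^k]$ an $x$-type caret gives children $[p,p+\tau^{k+2}]$, $[p+\tau^{k+2},p+\tau^k]$ while a $y$-type caret gives $[p,p+\tau^{k+1}]$, $[p+\tau^{k+1},p+\tau^k]$ (left, right). Leaves are numbered $0,1,\dots$ from left to right; a pair $(T_1,T_2)$ with equally many leaves represents the element mapping the $i$-th leaf interval of $T_1$ affinely increasingly onto that of $T_2$. A spine is a tree with only $x$-type carets, each non-root caret being the right child of its parent. $x_n$ ($n\ge0$) is represented by $(A,B)$, $B$ the spine with $n+2$ carets, $A$ the spine with $n+1$ carets with an $x$-type caret attached to leaf $n$; $y_n$ likewise with a $y$-type attached caret. *)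

(* Defs.v *)
From Stdlib Require Import Reals Lra Lia List Sorted ZArith.
Import ListNotations.
Open Scope R_scope.

Definition tau : R := (sqrt 5 - 1) / 2.

Definition inZtau (x : R) : Prop :=
  exists m n : Z, x = IZR m + IZR n * tau.

(* f (a function R -> R, only its restriction to [0,1] matters) is an element
   of F_tau: there is a subdivision 0 = p_0 < p_1 < ... < p_r = 1 with all
   p_i in Z[tau] such that on each [p_i, p_{i+1}] f is affine with slope
   tau^(k_i), k_i integer, and f 0 = 0, f 1 = 1.  (This makes f an
   orientation-preserving PL homeomorphism of [0,1] with breakpoints among
   the p_i.) *)
Definition in_Ftau (f : R -> R) : Prop :=
  exists (ps : list R) (ks : list Z),
    length ps = S (length ks) /\
    nth 0 ps 0 = 0 /\ nth (length ks) ps 0 = 1 /\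
    (forall p, In p ps -> inZtau p) /\
    (forall i, (i < length ks)%nat ->
       nth i ps 0 < nth (S i) ps 0 /\
       forall t, nth i ps 0 <= t <= nth (S i) ps 0 ->
         f t = f (nth i ps 0) + powerRZ tau (nth i ks 0%Z) * (t - nth i ps 0)) /\
    f 0 = 0 /\ f 1 = 1.

Inductive tree : Type :=
  | Leaf : tree
  | NodeX : tree -> tree -> tree
  | NodeY : tree -> tree -> tree.

(* leaf intervals (left to right) of a tree rooted at the interval [a,b]
   = [a, a + tau^k]. *)
Fixpoint leaves (T : tree) (a b : R) (k : Z) : list (R * R) :=
  match T with
  | Leaf => [(a, b)]
  | NodeX l r =>
      leaves l a (a + powerRZ tau (k + 2)) (k + 2)
      ++ leaves r (a + powerRZ tau (k + 2)) b (k + 1)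
  | NodeY l r =>
      leaves l a (a + powerRZ tau (k + 1)) (k + 1)
      ++ leaves r (a + powerRZ tau (k + 1)) b (k + 2)
  end.

Fixpoint pl_eval (l : list ((R * R) * (R * R))) (t : R) : R :=
  match l with
  | [] => t
  | ((a, b), (c, d)) :: l' =>
      if Rle_dec a t then
        if Rle_dec t b then c + (t - a) * (d - c) / (b - a) else pl_eval l' t
      else pl_eval l' t
  end.

Definition pair_fun (T1 T2 : tree) (t : R) : R :=
  pl_eval (combine (leaves T1 0 1 0) (leaves T2 0 1 0)) t.

Fixpoint spine_att (c : tree) (m : nat) : tree :=
  match m with
  | O => c
  | S m' => NodeX Leaf (spine_att c m')
  end.

Definition spine (m : nat) : tree := spine_att Leaf m.

(* A-tree: spine with n+1 carets with a caret c attached at leaf n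
   (leaf n is the left leaf of the (n+1)-st spine caret) *)
Definition gen_A (c : tree) (n : nat) : tree := spine_att (NodeX c Leaf) n.

(* generator letters: (true, n) = x_n, (false, n) = y_n *)
Definition letter : Type := (bool * nat)%type.

Definition caret_of (b : bool) : tree :=
  if b then NodeX Leaf Leaf else NodeY Leaf Leaf.

Definition gen_fun (g : letter) : R -> R :=
  pair_fun (gen_A (caret_of (fst g)) (snd g)) (spine (snd g + 2)).

Definition gen_inv_fun (g : letter) : R -> R :=
  pair_fun (spine (snd g + 2)) (gen_A (caret_of (fst g)) (snd g)).

(* gh means first g then h: apply the letters of the word in list order *)
Fixpoint apply_word (w : list letter) (t : R) : R :=
  match w with
  | [] => t
  | g :: w' => apply_word w' (gen_fun g t)
  end.

Fixpoint apply_inv_word (w : list letter) (t : R) : R :=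
  match w with
  | [] => t
  | g :: w' => apply_inv_word w' (gen_inv_fun g t)
  end.

(* Main.v *)
Require Import Defs.
From Stdlib Require Import Reals Lra Lia List Sorted ZArith Permutation.
Import ListNotations.
Open Scope R_scope.

Lemma sqrt5_sq : sqrt 5 * sqrt 5 = 5.
Proof. apply sqrt_sqrt; lra. Qed.

Lemma sqrt5_bounds : 2 < sqrt 5 < 3.
Proof.
  assert (H := sqrt5_sq). assert (H0 : 0 <= sqrt 5) by apply sqrt_pos.
  split; nra.
Qed.

Lemma tau_pos : 0 < tau.
Proof. unfold tau. pose proof sqrt5_bounds. lra. Qed.

Lemma tau_lt1 : tau < 1.
Proof. unfold tau. pose proof sqrt5_bounds. lra. Qed.

Lemma tau_eq : tau * tau + tau = 1.
Proof. unfold tau. pose proof sqrt5_sq. nra. Qed.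

Lemma tau_neq0 : tau <> 0.
Proof. pose proof tau_pos. lra. Qed.

Definition P (k : Z) : R := powerRZ tau k.

Lemma P_add : forall a b, P (a + b) = P a * P b.
Proof. intros. unfold P. apply powerRZ_add. apply tau_neq0. Qed.

Lemma P_pos : forall k, 0 < P k.
Proof. intros. unfold P. apply powerRZ_lt. apply tau_pos. Qed.

Lemma P_0 : P 0 = 1.
Proof. reflexivity. Qed.

Lemma P_1 : P 1 = tau.
Proof. unfold P. simpl. ring. Qed.

Lemma P_2 : P 2 = tau * tau.
Proof. unfold P. simpl. ring. Qed.

Lemma P_rec : forall k, P (k + 2) + P (k + 1) = P k.
Proof.
  intros. rewrite !P_add, P_1, P_2. pose proof tau_eq.
  replace (P k * (tau * tau) + P k * tau) with (P k * (tau*tau + tau)) by ring.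
  rewrite H. ring.
Qed.

Lemma P_sub : forall g e, P (g - e) * P e = P g.
Proof. intros. rewrite <- P_add. f_equal. lia. Qed.

Lemma P_div : forall g e, P g / P e = P (g - e).
Proof.
  intros. rewrite <- (P_sub g e). field. apply Rgt_not_eq, P_pos.
Qed.
Fixpoint ev (T : tree) (k : Z) : list Z :=
  match T with
  | Leaf => [k]
  | NodeX l r => ev l (k + 2)%Z ++ ev r (k + 1)%Z
  | NodeY l r => ev l (k + 1)%Z ++ ev r (k + 2)%Z
  end.

Fixpoint nleaves (T : tree) : nat :=
  match T with
  | Leaf => 1%nat
  | NodeX l r => (nleaves l + nleaves r)%nat
  | NodeY l r => (nleaves l + nleaves r)%nat
  end.

Fixpoint sumt (l : list Z) : R :=
  match l with [] => 0 | e :: l' => P e + sumt l' end.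

Fixpoint refine (D : list Z) (Ss : list tree) : list Z :=
  match D, Ss with
  | d :: D', U :: Ss' => ev U d ++ refine D' Ss'
  | _, _ => []
  end.

Lemma sumt_app : forall l1 l2, sumt (l1 ++ l2) = sumt l1 + sumt l2.
Proof. induction l1; intros; simpl; [ring | rewrite IHl1; ring]. Qed.

Lemma sumt_ev : forall T k, sumt (ev T k) = P k.
Proof.
  induction T; intros; simpl.
  - ring.
  - rewrite sumt_app, IHT1, IHT2. apply P_rec.
  - rewrite sumt_app, IHT1, IHT2. rewrite Rplus_comm. apply P_rec.
Qed.

Lemma length_ev : forall T k, length (ev T k) = nleaves T.
Proof. induction T; intros; simpl; rewrite ?length_app, ?IHT1, ?IHT2; reflexivity. Qed.

Lemma nleaves_pos : forall T, (1 <= nleaves T)%nat.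
Proof. induction T; simpl; lia. Qed.

Lemma refine_app : forall D1 D2 U1 U2, length D1 = length U1 ->
  refine (D1 ++ D2) (U1 ++ U2) = refine D1 U1 ++ refine D2 U2.
Proof.
  induction D1; intros; destruct U1; simpl in *; try lia; auto.
  rewrite IHD1 by lia. rewrite app_assoc. reflexivity.
Qed.

Lemma refine_leaves : forall D, refine D (repeat Leaf (length D)) = D.
Proof. induction D; simpl; auto. rewrite IHD; reflexivity. Qed.

Lemma sumt_refine : forall D Ss, length Ss = length D -> sumt (refine D Ss) = sumt D.
Proof.
  induction D; intros; destruct Ss; simpl in *; try lia; auto.
  rewrite sumt_app, sumt_ev, IHD by lia. reflexivity.
Qed.

Lemma length_refine : forall D Ss, length Ss = length D ->
  length (refine D Ss) = fold_right (fun U n => nleaves U + n)%nat 0%nat Ss.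
Proof.
  induction D; intros; destruct Ss; simpl in *; try lia; auto.
  rewrite length_app, length_ev, IHD by lia. reflexivity.
Qed.

Lemma length_refine_eq : forall D G Ss, length D = length G -> length Ss = length D ->
  length (refine D Ss) = length (refine G Ss).
Proof. intros. rewrite !length_refine by lia. reflexivity. Qed.

Lemma RegRefine : forall T k Rs, length Rs = nleaves T ->
  exists T', ev T' k = refine (ev T k) Rs.
Proof.
  induction T; intros k Rs HL; simpl in *.
  - destruct Rs as [|R [|]]; simpl in HL; try lia. exists R. simpl. rewrite app_nil_r. auto.
  - rewrite <- (firstn_skipn (nleaves T1) Rs).
    rewrite refine_app by (rewrite length_ev, length_firstn; lia).
    destruct (IHT1 (k+2)%Z (firstn (nleaves T1) Rs)) as [L HLx]. rewrite length_firstn; lia.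
    destruct (IHT2 (k+1)%Z (skipn (nleaves T1) Rs)) as [R HRx]. rewrite length_skipn; lia.
    exists (NodeX L R). simpl. rewrite HLx, HRx. auto.
  - rewrite <- (firstn_skipn (nleaves T1) Rs).
    rewrite refine_app by (rewrite length_ev, length_firstn; lia).
    destruct (IHT1 (k+1)%Z (firstn (nleaves T1) Rs)) as [L HLx]. rewrite length_firstn; lia.
    destruct (IHT2 (k+2)%Z (skipn (nleaves T1) Rs)) as [R HRx]. rewrite length_skipn; lia.
    exists (NodeY L R). simpl. rewrite HLx, HRx. auto.
Qed.

Lemma refine_refine : forall D Ss Rs, length Ss = length D ->
  length Rs = length (refine D Ss) ->
  exists Ss', length Ss' = length D /\ refine D Ss' = refine (refine D Ss) Rs.
Proof.
  induction D; intros Ss Rs H1 H2; destruct Ss as [|U Ss]; simpl in *; try lia.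
  - exists []. auto.
  - rewrite length_app, length_ev in H2.
    rewrite <- (firstn_skipn (nleaves U) Rs).
    rewrite refine_app by (rewrite length_ev, length_firstn; lia).
    destruct (RegRefine U a (firstn (nleaves U) Rs)) as [U' HS']. rewrite length_firstn; lia.
    destruct (IHD Ss (skipn (nleaves U) Rs)) as [Ss' [HL HE]]; try lia.
    rewrite length_skipn; lia.
    exists (U' :: Ss'). simpl. split; [lia|]. rewrite HS', HE. auto.
Qed.

Definition cx (b : bool) : Z * Z := if b then (2%Z, 1%Z) else (1%Z, 2%Z).
Definition Node (b : bool) (l r : tree) : tree := if b then NodeX l r else NodeY l r.

Lemma ev_Node : forall b l r k, ev (Node b l r) k = ev l (k + fst (cx b))%Z ++ ev r (k + snd (cx b))%Z.
Proof. destruct b; reflexivity. Qed.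

Lemma nleaves_Node : forall b l r, nleaves (Node b l r) = (nleaves l + nleaves r)%nat.
Proof. destruct b; reflexivity. Qed.

Lemma split_tree : forall U e b, exists Rs L R, length Rs = nleaves U /\
  refine (ev U e) Rs = ev L (e + fst (cx b))%Z ++ ev R (e + snd (cx b))%Z.
Proof.
  induction U; intros e b.
  - exists [Node b Leaf Leaf], Leaf, Leaf. split; auto. simpl. rewrite ev_Node, app_nil_r. auto.
  - destruct b; simpl.
    + exists (repeat Leaf (nleaves U1 + nleaves U2)), U1, U2. split. apply repeat_length.
      rewrite <- (length_ev U1 (e+2)), <- (length_ev U2 (e+1)), <- length_app. apply refine_leaves.
    + destruct (IHU2 (e+1)%Z true) as [Rs2 [L2 [R2 [HL HE]]]]. simpl in HE.
      exists (repeat Leaf (nleaves U1) ++ Rs2), (NodeY U1 L2), R2. split.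
      rewrite length_app, repeat_length; lia.
      rewrite refine_app by (rewrite repeat_length, length_ev; auto).
      rewrite <- (length_ev U1 (e+2)), refine_leaves, HE. simpl.
      replace (e + 1 + 1)%Z with (e+2)%Z by lia. replace (e + 1 + 2)%Z with (e+3)%Z by lia.
      replace (e + 1 + 1)%Z with (e+2)%Z by lia. rewrite app_assoc. auto.
  - destruct b; simpl.
    + destruct (IHU1 (e+1)%Z false) as [Rs1 [L1 [R1 [HL HE]]]]. simpl in HE.
      exists (Rs1 ++ repeat Leaf (nleaves U2)), L1, (NodeX R1 U2). split.
      rewrite length_app, repeat_length; lia.
      rewrite refine_app by (rewrite length_ev; auto).
      rewrite <- (length_ev U2 (e+2)), refine_leaves, HE. simpl.
      replace (e + 1 + 1)%Z with (e+2)%Z by lia. replace (e + 1 + 2)%Z with (e+3)%Z by lia.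
      rewrite app_assoc. auto.
    + exists (repeat Leaf (nleaves U1 + nleaves U2)), U1, U2. split. apply repeat_length.
      rewrite <- (length_ev U1 (e+1)), <- (length_ev U2 (e+2)), <- length_app. apply refine_leaves.
Qed.
Definition Good (k : Z) (D : list Z) : Prop :=
  exists T Ss, length Ss = length D /\ ev T k = refine D Ss.

Lemma Good_refine : forall k D Ss, length Ss = length D -> Good k (refine D Ss) -> Good k D.
Proof.
  intros k D Ss HL [T [Rs [H1 H2]]].
  destruct (refine_refine D Ss Rs HL H1) as [Ss' [H3 H4]].
  exists T, Ss'. split; auto. rewrite H2, H4. auto.
Qed.

Lemma Good_swap : forall k N pre post x y,
  ((x = N /\ y = N + 1) \/ (x = N + 1 /\ y = N))%Z ->
  Good k (pre ++ x :: y :: post) -> Good k (pre ++ y :: x :: post).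
Proof.
  intros k N pre post x y Hxy [T [Ss [HL HE]]].
  rewrite length_app in HL. simpl in HL.
  rewrite <- (firstn_skipn (length pre) Ss) in HE.
  remember (skipn (length pre) Ss) as Ss2.
  assert (HL2 : length Ss2 = S (S (length post))) by (subst; rewrite length_skipn; lia).
  destruct Ss2 as [|Ux [|Uy Ss3]]; simpl in HL2; try lia.
  assert (HL1 : length (firstn (length pre) Ss) = length pre) by (rewrite length_firstn; lia).
  rewrite refine_app in HE by auto. simpl in HE.
  set (e := (N - 1)%Z).
  set (b0 := if Z.eq_dec x N then false else true).
  assert (HJ : ev (Node b0 Ux Uy) e = ev Ux x ++ ev Uy y).
  { rewrite ev_Node. unfold b0, e. destruct (Z.eq_dec x N); simpl.
    - replace (N - 1 + 1)%Z with x by lia. replace (N - 1 + 2)%Z with y by lia. auto.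
    - replace (N - 1 + 2)%Z with x by lia. replace (N - 1 + 1)%Z with y by lia. auto. }
  destruct (split_tree (Node b0 Ux Uy) e (negb b0)) as [Rs [L [R [HRL HRE]]]].
  assert (HRE' : refine (ev (Node b0 Ux Uy) e) Rs = ev L y ++ ev R x).
  { rewrite HRE. unfold b0, e. destruct (Z.eq_dec x N); simpl.
    - replace (N - 1 + 2)%Z with y by lia. replace (N - 1 + 1)%Z with x by lia. auto.
    - replace (N - 1 + 1)%Z with y by lia. replace (N - 1 + 2)%Z with x by lia. auto. }
  set (A1 := refine pre (firstn (length pre) Ss)).
  set (A3 := refine post Ss3).
  assert (HT : ev T k = A1 ++ ev (Node b0 Ux Uy) e ++ A3).
  { rewrite HE, HJ. unfold A1, A3. rewrite <- !app_assoc. reflexivity. }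
  destruct (RegRefine T k (repeat Leaf (length A1) ++ Rs ++ repeat Leaf (length A3))) as [T' HT'].
  { rewrite <- (length_ev T k), HT, !length_app, !repeat_length, HRL, length_ev. auto. }
  exists T', (firstn (length pre) Ss ++ L :: R :: Ss3). split.
  - rewrite !length_app. simpl. lia.
  - rewrite HT', HT. rewrite refine_app by (rewrite repeat_length; auto).
    rewrite refine_app by (rewrite HRL, length_ev; auto).
    rewrite !refine_leaves, HRE'. rewrite refine_app by auto. simpl.
    fold A1 A3. rewrite <- ?app_assoc. reflexivity.
Qed.

Lemma Good_perm : forall k N l l', Permutation l l' ->
  (forall z, In z l -> z = N \/ z = (N + 1)%Z) ->
  forall pre, Good k (pre ++ l') -> Good k (pre ++ l).
Proof.
  intros k N l l' HP. induction HP; intros Hz pre HG.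
  - auto.
  - replace (pre ++ x :: l) with ((pre ++ [x]) ++ l) by (rewrite <- app_assoc; auto).
    apply IHHP. intros; apply Hz; simpl; auto.
    rewrite <- app_assoc. auto.
  - destruct (Z.eq_dec x y).
    + subst. auto.
    + apply (Good_swap k N pre l x y); auto.
      assert (Hx := Hz x). assert (Hy := Hz y). simpl in Hx, Hy.
      specialize (Hx (or_intror (or_introl eq_refl))). specialize (Hy (or_introl eq_refl)).
      lia.
  - apply IHHP1; auto. apply IHHP2; auto.
    intros z Hin. apply Hz. apply Permutation_in with l'; auto. apply Permutation_sym; auto.
Qed.

Fixpoint canonT (n : nat) : tree :=
  match n with
  | O => Leaf
  | S m => NodeX (match m with O => Leaf | S p => canonT p end) (canonT m)
  end.

Lemma canon_letters : forall n e z, In z (ev (canonT n) e) ->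
  z = (e + Z.of_nat n)%Z \/ z = (e + Z.of_nat n + 1)%Z.
Proof.
  assert (H : forall n, forall m, (m <= n)%nat -> forall e z, In z (ev (canonT m) e) ->
     z = (e + Z.of_nat m)%Z \/ z = (e + Z.of_nat m + 1)%Z).
  { induction n; intros m Hm e z Hin.
    - assert (m = 0%nat) by lia. subst. simpl in Hin. destruct Hin as [H|[]]. lia.
    - destruct m as [|m].
      + simpl in Hin. destruct Hin as [H|[]]. lia.
      + simpl in Hin. apply in_app_or in Hin. destruct Hin as [Hin|Hin].
        * destruct m as [|p].
          -- simpl in Hin. destruct Hin as [H|[]]. lia.
          -- apply IHn in Hin; [|lia]. lia.
        * apply IHn in Hin; [|lia]. lia. }
  intros. eapply H; eauto.
Qed.

Lemma tau_irr_Z : forall n : nat, forall p q : Z, (Z.abs p + Z.abs q <= Z.of_nat n)%Z ->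
  (p * p - p * q - q * q = 0)%Z -> p = 0%Z /\ q = 0%Z.
Proof.
  induction n; intros p q Hn He.
  - lia.
  - destruct (Z.even p) eqn:Ep; destruct (Z.even q) eqn:Eq.
    + apply Z.even_spec in Ep. apply Z.even_spec in Eq.
      destruct Ep as [p' Hp]. destruct Eq as [q' Hq]. subst.
      destruct (Z.eq_dec p' 0); destruct (Z.eq_dec q' 0); try (split; lia).
      assert (p' * p' - p' * q' - q' * q' = 0)%Z by nia.
      destruct (IHn p' q'); lia.
    + exfalso. apply Z.even_spec in Ep. destruct Ep as [p' Hp].
      assert (Z.odd q = true) by (rewrite <- Z.negb_even, Eq; auto).
      apply Z.odd_spec in H. destruct H as [q' Hq]. subst. nia.
    + exfalso. apply Z.even_spec in Eq. destruct Eq as [q' Hq].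
      assert (Z.odd p = true) by (rewrite <- Z.negb_even, Ep; auto).
      apply Z.odd_spec in H. destruct H as [p' Hp]. subst. nia.
    + exfalso.
      assert (Z.odd q = true) by (rewrite <- Z.negb_even, Eq; auto).
      assert (Z.odd p = true) by (rewrite <- Z.negb_even, Ep; auto).
      apply Z.odd_spec in H. destruct H as [q' Hq].
      apply Z.odd_spec in H0. destruct H0 as [p' Hp]. subst. nia.
Qed.

Lemma tau_irr : forall p q : Z, IZR p + IZR q * tau = 0 -> p = 0%Z /\ q = 0%Z.
Proof.
  intros p q H.
  assert (Hq : IZR p * IZR p - IZR p * IZR q - IZR q * IZR q = 0).
  { assert (IZR p = - (IZR q * tau)) by lra. rewrite H0.
    pose proof tau_eq.
    replace (- (IZR q * tau) * - (IZR q * tau) - - (IZR q * tau) * IZR q - IZR q * IZR q)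
      with (IZR q * IZR q * (tau * tau + tau - 1)) by ring.
    rewrite H1. ring. }
  rewrite <- !mult_IZR, <- !minus_IZR in Hq. apply eq_IZR in Hq.
  apply (tau_irr_Z (Z.to_nat (Z.abs p + Z.abs q))); auto. lia.
Qed.
Lemma sumt_word : forall N w, (forall z, In z w -> z = N \/ z = (N+1)%Z) ->
  sumt w = INR (count_occ Z.eq_dec w N) * P N + INR (count_occ Z.eq_dec w (N+1)%Z) * P (N+1)%Z.
Proof.
  induction w; intros Hw; simpl.
  - ring.
  - rewrite IHw by (intros; apply Hw; simpl; auto).
    destruct (Hw a (or_introl eq_refl)); subst.
    + destruct (Z.eq_dec N N); [|congruence]. destruct (Z.eq_dec N (N+1)); [lia|].
      rewrite S_INR. ring.
    + destruct (Z.eq_dec (N+1) N); [lia|]. destruct (Z.eq_dec (N+1) (N+1)); [|congruence].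
      rewrite S_INR. ring.
Qed.

Lemma counts_eq : forall N w w0,
  (forall z, In z w -> z = N \/ z = (N+1)%Z) -> (forall z, In z w0 -> z = N \/ z = (N+1)%Z) ->
  sumt w = sumt w0 ->
  count_occ Z.eq_dec w N = count_occ Z.eq_dec w0 N /\
  count_occ Z.eq_dec w (N+1)%Z = count_occ Z.eq_dec w0 (N+1)%Z.
Proof.
  intros N w w0 H1 H2 H. rewrite (sumt_word N w H1), (sumt_word N w0 H2) in H.
  rewrite P_add, P_1 in H.
  set (a := count_occ Z.eq_dec w N) in *. set (b := count_occ Z.eq_dec w (N+1)%Z) in *.
  set (a0 := count_occ Z.eq_dec w0 N) in *. set (b0 := count_occ Z.eq_dec w0 (N+1)%Z) in *.
  assert (HP := P_pos N).
  assert (Hz : IZR (Z.of_nat a - Z.of_nat a0) + IZR (Z.of_nat b - Z.of_nat b0) * tau = 0).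
  { rewrite !minus_IZR, <- !INR_IZR_INZ.
    apply (Rmult_eq_reg_l (P N)); [|lra]. rewrite Rmult_0_r.
    replace (P N * ((INR a - INR a0) + (INR b - INR b0) * tau)) with
       ((INR a * P N + INR b * (P N * tau)) - (INR a0 * P N + INR b0 * (P N * tau))) by ring.
    rewrite H. ring. }
  apply tau_irr in Hz. lia.
Qed.

Lemma perm_words : forall N w w0,
  (forall z, In z w -> z = N \/ z = (N+1)%Z) -> (forall z, In z w0 -> z = N \/ z = (N+1)%Z) ->
  count_occ Z.eq_dec w N = count_occ Z.eq_dec w0 N ->
  count_occ Z.eq_dec w (N+1)%Z = count_occ Z.eq_dec w0 (N+1)%Z ->
  Permutation w w0.
Proof.
  intros N w w0 H1 H2 Ha Hb. apply (Permutation_count_occ Z.eq_dec). intros x.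
  destruct (Z.eq_dec x N); [subst; auto|].
  destruct (Z.eq_dec x (N+1)); [subst; auto|].
  assert (~ In x w) by (intro Hi; destruct (H1 x Hi); lia).
  assert (~ In x w0) by (intro Hi; destruct (H2 x Hi); lia).
  assert (E1 : count_occ Z.eq_dec w x = 0%nat) by (apply count_occ_not_In; auto).
  assert (E2 : count_occ Z.eq_dec w0 x = 0%nat) by (apply count_occ_not_In; auto).
  rewrite E1, E2. auto.
Qed.

Lemma in_refine_map : forall (f : Z -> tree) D z, In z (refine D (map f D)) ->
  exists d, In d D /\ In z (ev (f d) d).
Proof.
  induction D; intros z Hin; simpl in *; [contradiction|].
  apply in_app_or in Hin. destruct Hin as [Hin|Hin].
  - exists a; auto.
  - destruct (IHD z Hin) as [d [H1 H2]]. exists d; auto.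
Qed.

Lemma fold_max_ge : forall k D, (k <= fold_right Z.max k D)%Z /\
  forall d, In d D -> (d <= fold_right Z.max k D)%Z.
Proof.
  induction D; simpl; split; intros; try contradiction; try lia.
  destruct IHD as [H1 H2]. destruct H; [subst; lia|]. specialize (H2 d H). lia.
Qed.

Theorem L5 : forall k D, sumt D = P k -> Good k D.
Proof.
  intros k D HS.
  set (N := fold_right Z.max k D).
  destruct (fold_max_ge k D) as [HkN HdN]. fold N in HkN, HdN.
  set (f := fun d => canonT (Z.to_nat (N - d))).
  assert (HL : length (map f D) = length D) by apply length_map.
  apply (Good_refine k D (map f D) HL).
  set (W0 := ev (canonT (Z.to_nat (N - k))) k).
  assert (HW0 : forall z, In z W0 -> z = N \/ z = (N+1)%Z).
  { intros z Hz. apply canon_letters in Hz. lia. }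
  assert (HW : forall z, In z (refine D (map f D)) -> z = N \/ z = (N+1)%Z).
  { intros z Hz. apply in_refine_map in Hz. destruct Hz as [d [Hd Hz]].
    unfold f in Hz. apply canon_letters in Hz. specialize (HdN d Hd). lia. }
  assert (Hsum : sumt (refine D (map f D)) = sumt W0).
  { rewrite sumt_refine by auto. unfold W0. rewrite sumt_ev. auto. }
  destruct (counts_eq N _ _ HW HW0 Hsum) as [Ha Hb].
  pose proof (perm_words N _ _ HW HW0 Ha Hb) as Hperm.
  apply (Good_perm k N _ _ Hperm HW []). simpl.
  exists (canonT (Z.to_nat (N - k))), (repeat Leaf (length W0)). split.
  - apply repeat_length.
  - rewrite refine_leaves. auto.
Qed.
Fixpoint DescR (f : R -> R) (a c : R) (es gs : list Z) : Prop :=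
  match es, gs with
  | [], [] => True
  | e :: es', g :: gs' =>
      (forall t, a <= t <= a + P e -> f t = c + P (g - e) * (t - a)) /\
      DescR f (a + P e) (c + P g) es' gs'
  | _, _ => False
  end.

Lemma DescR_len : forall f es gs a c, DescR f a c es gs -> length es = length gs.
Proof.
  induction es; destruct gs; simpl; intros; try tauto.
  f_equal. destruct H. eauto.
Qed.

Lemma DescR_app : forall f es1 gs1 es2 gs2 a c, length es1 = length gs1 ->
  (DescR f a c (es1 ++ es2) (gs1 ++ gs2) <->
   DescR f a c es1 gs1 /\ DescR f (a + sumt es1) (c + sumt gs1) es2 gs2).
Proof.
  induction es1; destruct gs1; simpl; intros; try lia.
  - rewrite !Rplus_0_r. tauto.
  - rewrite IHes1 by lia.
    replace (a0 + P a + sumt es1) with (a0 + (P a + sumt es1)) by ring.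
    replace (c + P z + sumt gs1) with (c + (P z + sumt gs1)) by ring.
    tauto.
Qed.

Lemma P_le_split : forall e, P (e + 2) <= P e /\ P (e + 1) <= P e.
Proof. intros. pose proof (P_rec e). pose proof (P_pos (e+2)). pose proof (P_pos (e+1)). lra. Qed.

Lemma DescR_piece : forall U f a c e g,
  (forall t, a <= t <= a + P e -> f t = c + P (g - e) * (t - a)) ->
  DescR f a c (ev U e) (ev U g).
Proof.
  induction U; intros f a c e g H; simpl.
  - split; auto.
  - apply DescR_app; [rewrite !length_ev; auto|]. rewrite sumt_ev, sumt_ev.
    destruct (P_le_split e) as [H2 H1]. pose proof (P_rec e).
    split.
    + apply IHU1. intros t Ht. replace (g + 2 - (e + 2))%Z with (g - e)%Z by lia. apply H. lra.
    + apply IHU2. intros t Ht. replace (g + 1 - (e + 1))%Z with (g - e)%Z by lia.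
      rewrite H by lra.
      assert (P (g - e) * P (e + 2) = P (g + 2)) by (rewrite <- P_add; f_equal; lia).
      nra.
  - apply DescR_app; [rewrite !length_ev; auto|]. rewrite sumt_ev, sumt_ev.
    destruct (P_le_split e) as [H2 H1]. pose proof (P_rec e).
    split.
    + apply IHU1. intros t Ht. replace (g + 1 - (e + 1))%Z with (g - e)%Z by lia. apply H. lra.
    + apply IHU2. intros t Ht. replace (g + 2 - (e + 2))%Z with (g - e)%Z by lia.
      rewrite H by lra.
      assert (P (g - e) * P (e + 1) = P (g + 1)) by (rewrite <- P_add; f_equal; lia).
      nra.
Qed.

Lemma DescR_refine : forall f es gs Ss a c, DescR f a c es gs -> length Ss = length es ->
  DescR f a c (refine es Ss) (refine gs Ss).
Proof.
  induction es; destruct gs; destruct Ss; simpl; intros; try tauto; try lia.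
  destruct H as [H1 H2].
  apply DescR_app; [rewrite !length_ev; auto|]. rewrite !sumt_ev. split.
  - apply DescR_piece; auto.
  - apply IHes; auto.
Qed.

Lemma DescR_comp : forall f h es gs hs a c d, DescR f a c es gs -> DescR h c d gs hs ->
  DescR (fun t => h (f t)) a d es hs.
Proof.
  induction es; destruct gs; destruct hs; simpl; intros; try tauto.
  destruct H as [H1 H2]. destruct H0 as [H3 H4]. split; [|eauto].
  intros t Ht. rewrite H1 by auto.
  assert (Hp : P (z - a) * P a = P z) by apply P_sub.
  assert (0 <= P (z - a)) by (left; apply P_pos).
  rewrite H3.
  - assert (P (z0 - z) * P (z - a) = P (z0 - a)) by (rewrite <- P_add; f_equal; lia).
    replace (c + P (z - a) * (t - a0) - c) with (P (z - a) * (t - a0)) by ring.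
    rewrite <- H0. ring.
  - split; nra.
Qed.

Lemma sumt_nonneg : forall l, 0 <= sumt l.
Proof. induction l; simpl; [lra|]. pose proof (P_pos a). lra. Qed.

Lemma DescR_uniq : forall f h es gs a c, DescR f a c es gs -> DescR h a c es gs ->
  forall t, a <= t <= a + sumt es -> es <> [] -> f t = h t.
Proof.
  intros f h es. induction es as [|e es IH]; intros gs a c HF HH t Ht Hne; destruct gs as [|g gs];
    simpl in *; try tauto.
  destruct HF as [K1 K2]. destruct HH as [K3 K4].
  destruct (Rle_dec t (a + P e)).
  - rewrite K1, K3 by lra. auto.
  - destruct es as [|e' es].
    + simpl in Ht. lra.
    + eapply IH; eauto. lra. discriminate.
Qed.

Lemma DescR_start : forall f es gs a c, DescR f a c es gs -> es <> [] -> f a = c.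
Proof.
  intros f es gs a c HF Hne. destruct es as [|e es]; destruct gs as [|g gs]; simpl in *; try tauto.
  destruct HF as [K1 _]. rewrite K1. ring. pose proof (P_pos e). lra.
Qed.

Lemma DescR_range : forall f es gs a c, DescR f a c es gs ->
  forall t, a <= t <= a + sumt es -> es <> [] -> c <= f t <= c + sumt gs.
Proof.
  intros f es. induction es as [|e es IH]; intros gs a c HF t Ht Hne; destruct gs as [|g gs];
    simpl in *; try tauto.
  destruct HF as [K1 K2].
  pose proof (sumt_nonneg es). pose proof (sumt_nonneg gs).
  destruct (Rle_dec t (a + P e)).
  - rewrite K1 by lra.
    assert (Hp : P (g - e) * P e = P g) by apply P_sub.
    pose proof (P_pos (g - e)). split; nra.
  - destruct es as [|e' es].
    + simpl in Ht. lra.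
    + assert (c + P g <= f t <= c + P g + sumt gs) by (eapply IH; eauto; [lra|discriminate]).
      pose proof (P_pos g). lra.
Qed.

Lemma DescR_end : forall f es gs a c, DescR f a c es gs -> es <> [] ->
  f (a + sumt es) = c + sumt gs.
Proof.
  intros f es. induction es as [|e es IH]; intros gs a c HF Hne; destruct gs as [|g gs];
    simpl in *; try tauto.
  destruct HF as [K1 K2].
  destruct es as [|e' es].
  - destruct gs; simpl in K2; try tauto. rewrite !Rplus_0_r. rewrite K1.
    rewrite <- (P_sub g e). ring. pose proof (P_pos e). lra.
  - replace (a + (P e + sumt (e' :: es))) with (a + P e + sumt (e' :: es)) by ring.
    rewrite (IH gs (a + P e) (c + P g) K2) by discriminate. ring.
Qed.

Lemma DescR_id : forall es a, DescR (fun t => t) a a es es.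
Proof.
  induction es; simpl; intros; auto. split; auto.
  intros. replace (a - a)%Z with 0%Z by lia. rewrite P_0. ring.
Qed.

Lemma DescR_eq : forall f h es gs a c, DescR f a c es gs ->
  (forall t, a <= t -> h t = f t) -> DescR h a c es gs.
Proof.
  intros f h es. induction es as [|e es IH]; intros gs a c HF Hh; destruct gs as [|g gs];
    simpl in *; try tauto.
  destruct HF as [K1 K2]. split.
  - intros t Ht. rewrite Hh by lra. auto.
  - apply IH; auto. intros t Ht. apply Hh. pose proof (P_pos e). lra.
Qed.

Fixpoint mk (a : R) (es : list Z) : list (R * R) :=
  match es with
  | [] => []
  | e :: es' => (a, a + P e) :: mk (a + P e) es'
  end.

Lemma mk_app : forall s1 s2 a, mk a (s1 ++ s2) = mk a s1 ++ mk (a + sumt s1) s2.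
Proof.
  induction s1; simpl; intros.
  - rewrite Rplus_0_r. auto.
  - rewrite IHs1. replace (a0 + P a + sumt s1) with (a0 + (P a + sumt s1)) by ring. auto.
Qed.

Lemma leaves_mk : forall T a b k, b = a + P k -> leaves T a b k = mk a (ev T k).
Proof.
  induction T; intros a b k Hb; simpl.
  - rewrite Hb. auto.
  - rewrite mk_app, sumt_ev. fold (P (k+2)).
    rewrite (IHT1 a (a + P (k+2)) (k+2)%Z) by auto.
    rewrite (IHT2 (a + P (k+2)) b (k+1)%Z); auto.
    rewrite Hb, <- (P_rec k). ring.
  - rewrite mk_app, sumt_ev. fold (P (k+1)).
    rewrite (IHT1 a (a + P (k+1)) (k+1)%Z) by auto.
    rewrite (IHT2 (a + P (k+1)) b (k+2)%Z); auto.
    rewrite Hb, <- (P_rec k). ring.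
Qed.

Lemma PLsem : forall es gs a c, length es = length gs ->
  DescR (pl_eval (combine (mk a es) (mk c gs))) a c es gs.
Proof.
  induction es; destruct gs; simpl; intros; try lia; auto.
  assert (Hpa := P_pos a). assert (Hpz := P_pos z).
  assert (Hhead : forall t, a0 <= t <= a0 + P a ->
     pl_eval (((a0, a0 + P a), (c, c + P z)) :: combine (mk (a0 + P a) es) (mk (c + P z) gs)) t
     = c + P (z - a) * (t - a0)).
  { intros t Ht. simpl. destruct (Rle_dec a0 t); [|lra]. destruct (Rle_dec t (a0 + P a)); [|lra].
    rewrite <- (P_sub z a). field. lra. }
  split; [exact Hhead|].
  specialize (IHes gs (a0 + P a) (c + P z) ltac:(lia)).
  destruct es as [|e es].
  - destruct gs; simpl in *; try lia; auto.
  - apply DescR_eq with (f := pl_eval (combine (mk (a0 + P a) (e :: es)) (mk (c + P z) gs))); auto.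
    intros t Ht. destruct (Rle_dec t (a0 + P a)).
    + assert (t = a0 + P a) by lra. subst t.
      pose proof (DescR_start _ _ _ _ _ IHes) as HS.
      rewrite HS by discriminate.
      simpl. destruct (Rle_dec a0 (a0 + P a)); [|lra].
      try (destruct (Rle_dec (a0 + P a) (a0 + P a)); [|lra]).
      field. lra.
    + simpl. destruct (Rle_dec a0 t); [|lra]. destruct (Rle_dec t (a0 + P a)); [lra|]. auto.
Qed.

Lemma pair_fun_desc : forall T1 T2, nleaves T1 = nleaves T2 ->
  DescR (pair_fun T1 T2) 0 0 (ev T1 0) (ev T2 0).
Proof.
  intros. unfold pair_fun.
  rewrite (leaves_mk T1 0 1 0) by (rewrite P_0; ring).
  rewrite (leaves_mk T2 0 1 0) by (rewrite P_0; ring).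
  apply PLsem. rewrite !length_ev. auto.
Qed.
Fixpoint sp (ls : list tree) (c : tree) : tree :=
  match ls with [] => c | l :: ls' => NodeX l (sp ls' c) end.

Fixpoint spine_ev (ls : list tree) (k : Z) : list Z :=
  match ls with [] => [] | l :: ls' => ev l (k + 2)%Z ++ spine_ev ls' (k + 1)%Z end.

Lemma ev_sp : forall ls c k, ev (sp ls c) k = spine_ev ls k ++ ev c (k + Z.of_nat (length ls))%Z.
Proof.
  induction ls; intros; simpl.
  - rewrite Z.add_0_r. auto.
  - rewrite IHls, app_assoc. do 2 f_equal. lia.
Qed.

Lemma sp_app : forall ls1 ls2 c, sp (ls1 ++ ls2) c = sp ls1 (sp ls2 c).
Proof. induction ls1; simpl; intros; auto. rewrite IHls1; auto. Qed.

Lemma spine_att_sp : forall c m, spine_att c m = sp (repeat Leaf m) c.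
Proof. induction m; simpl; auto. rewrite IHm; auto. Qed.

Lemma spine_sp : forall m, spine m = sp (repeat Leaf m) Leaf.
Proof. intros. unfold spine. apply spine_att_sp. Qed.

Lemma genA_sp : forall c n, gen_A c n = sp (repeat Leaf n ++ [c]) Leaf.
Proof. intros. unfold gen_A. rewrite spine_att_sp, sp_app. auto. Qed.

Lemma length_spine_ev_leaves : forall n k, length (spine_ev (repeat Leaf n) k) = n.
Proof. induction n; intros; simpl; auto. Qed.

Fixpoint sumleaves (ls : list tree) : nat :=
  match ls with [] => 0%nat | l :: ls' => (nleaves l + sumleaves ls')%nat end.

Lemma nleaves_sp : forall ls c, nleaves (sp ls c) = (sumleaves ls + nleaves c)%nat.
Proof. induction ls; simpl; intros; auto. rewrite IHls. lia. Qed.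

Lemma sumleaves_app : forall l1 l2, sumleaves (l1 ++ l2) = (sumleaves l1 + sumleaves l2)%nat.
Proof. induction l1; simpl; intros; auto. rewrite IHl1. lia. Qed.

Lemma sumleaves_repeat : forall n, sumleaves (repeat Leaf n) = n.
Proof. induction n; simpl; auto. Qed.

Lemma caret_Node : forall b, caret_of b = Node b Leaf Leaf.
Proof. destruct b; auto. Qed.

Lemma nleaves_genA : forall g, nleaves (gen_A (caret_of (fst g)) (snd g)) = nleaves (spine (snd g + 2)).
Proof.
  intros [b n]. simpl. rewrite genA_sp, spine_sp, !nleaves_sp, sumleaves_app, !sumleaves_repeat.
  simpl. rewrite caret_Node, nleaves_Node. simpl. lia.
Qed.

Lemma gen_desc : forall g, DescR (gen_fun g) 0 0
  (ev (gen_A (caret_of (fst g)) (snd g)) 0) (ev (spine (snd g + 2)) 0).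
Proof. intros. unfold gen_fun. apply pair_fun_desc. apply nleaves_genA. Qed.

Lemma gen_inv_desc : forall g, DescR (gen_inv_fun g) 0 0
  (ev (spine (snd g + 2)) 0) (ev (gen_A (caret_of (fst g)) (snd g)) 0).
Proof. intros. unfold gen_inv_fun. apply pair_fun_desc. symmetry. apply nleaves_genA. Qed.

Lemma ev_sp_leaves : forall n ls c k,
  ev (sp (repeat Leaf n ++ ls) c) k = spine_ev (repeat Leaf n) k ++ ev (sp ls c) (k + Z.of_nat n)%Z.
Proof.
  intros. rewrite sp_app, ev_sp, repeat_length. auto.
Qed.

Lemma refine_leaves_n : forall D n, length D = n -> refine D (repeat Leaf n) = D.
Proof. intros. subst. apply refine_leaves. Qed.

Lemma rot_dom : forall i0 b a c rest,
  ev (sp (repeat Leaf i0 ++ Node b a c :: rest) Leaf) 0 =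
  refine (ev (gen_A (caret_of b) i0) 0) (repeat Leaf i0 ++ [a; c; sp rest Leaf]).
Proof.
  intros. rewrite genA_sp, !ev_sp_leaves.
  rewrite refine_app by (rewrite repeat_length, length_spine_ev_leaves; auto).
  rewrite (refine_leaves_n _ i0) by apply length_spine_ev_leaves. f_equal.
  rewrite caret_Node. simpl. rewrite !ev_Node. simpl. rewrite !app_nil_r.
  rewrite <- !app_assoc. reflexivity.
Qed.

Lemma rot_cod : forall i0 a c rest,
  ev (sp (repeat Leaf i0 ++ a :: c :: rest) Leaf) 0 =
  refine (ev (spine (i0 + 2)) 0) (repeat Leaf i0 ++ [a; c; sp rest Leaf]).
Proof.
  intros. rewrite spine_sp, repeat_app, !ev_sp_leaves.
  rewrite refine_app by (rewrite repeat_length, length_spine_ev_leaves; auto).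
  rewrite (refine_leaves_n _ i0) by apply length_spine_ev_leaves. f_equal.
  simpl. rewrite !app_nil_r. reflexivity.
Qed.
Lemma rot_desc : forall i0 b a c rest,
  DescR (gen_fun (b, i0)) 0 0 (ev (sp (repeat Leaf i0 ++ Node b a c :: rest) Leaf) 0)
    (ev (sp (repeat Leaf i0 ++ a :: c :: rest) Leaf) 0).
Proof.
  intros. rewrite rot_dom, rot_cod.
  apply DescR_refine. exact (gen_desc (b, i0)).
  rewrite length_ev, genA_sp, nleaves_sp, sumleaves_app, sumleaves_repeat, length_app, repeat_length.
  rewrite caret_Node. simpl. rewrite nleaves_Node. simpl. lia.
Qed.

Fixpoint ncar (T : tree) : nat :=
  match T with Leaf => 0%nat | NodeX l r => S (ncar l + ncar r) | NodeY l r => S (ncar l + ncar r) end.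

Fixpoint ncars (ls : list tree) : nat :=
  match ls with [] => 0%nat | l :: ls' => (ncar l + ncars ls')%nat end.

Lemma ncars_app : forall l1 l2, ncars (l1 ++ l2) = (ncars l1 + ncars l2)%nat.
Proof. induction l1; simpl; intros; auto. rewrite IHl1. lia. Qed.

Lemma first_nonleaf : forall ls, Forall (fun l => l = Leaf) ls \/
  exists i0 T0 rest, ls = repeat Leaf i0 ++ T0 :: rest /\ T0 <> Leaf.
Proof.
  induction ls as [|l ls IH].
  - left. constructor.
  - destruct l as [|l1 l2|l1 l2].
    + destruct IH as [IH|[i0 [T0 [rest [H1 H2]]]]].
      * left. constructor; auto.
      * right. exists (S i0), T0, rest. split; auto. rewrite H1. auto.
    + right. exists 0%nat, (NodeX l1 l2), ls. split; auto. discriminate.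
    + right. exists 0%nat, (NodeY l1 l2), ls. split; auto. discriminate.
Qed.

Lemma Forall_leaf_repeat : forall ls, Forall (fun l => l = Leaf) ls -> ls = repeat Leaf (length ls).
Proof. induction ls; simpl; intros; auto. inversion H; subst. rewrite <- IHls; auto. Qed.

Theorem PW : forall n ls i, (ncars ls <= n)%nat ->
  (forall j, (j < i)%nat -> nth j ls Leaf = Leaf) ->
  forall M, nleaves (sp ls Leaf) = S M ->
  exists w : list letter, Sorted le (map snd w) /\ Forall (fun g => (i <= snd g)%nat) w /\
    DescR (apply_word w) 0 0 (ev (sp ls Leaf) 0) (ev (spine M) 0).
Proof.
  induction n as [|n IH]; intros ls i Hn Hi M HM;
  (destruct (first_nonleaf ls) as [Hall|[i0 [T0 [rest [Hls HT0]]]]];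
   [ apply Forall_leaf_repeat in Hall;
     rewrite Hall, nleaves_sp, sumleaves_repeat in HM; simpl in HM;
     assert (M = length ls) by lia; subst M;
     exists []; split; [constructor|]; split; [constructor|];
     rewrite spine_sp, <- Hall; apply DescR_id
   | ]).
  - exfalso. subst ls. rewrite ncars_app in Hn. destruct T0; simpl in Hn; try lia. congruence.
  - assert (Hii0 : (i <= i0)%nat).
    { destruct (Nat.le_gt_cases i i0); auto. specialize (Hi i0 H). subst ls.
      rewrite app_nth2 in Hi; rewrite repeat_length in *; try lia.
      rewrite Nat.sub_diag in Hi. simpl in Hi. congruence. }
    assert (HT : exists b a c, T0 = Node b a c).
    { destruct T0; [congruence | exists true | exists false]; eauto. }
    destruct HT as [b [a [c HT]]]. subst T0 ls.
    set (ls' := repeat Leaf i0 ++ a :: c :: rest).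
    destruct (IH ls' i0) with (M := M) as [w' [Hs [Hf HD]]].
    + unfold ls'. rewrite ncars_app in *. simpl in *. destruct b; simpl in Hn; lia.
    + intros j Hj. unfold ls'. rewrite app_nth1 by (rewrite repeat_length; auto).
      apply nth_repeat.
    + rewrite <- HM. unfold ls'. rewrite !nleaves_sp, !sumleaves_app. simpl.
      rewrite nleaves_Node. lia.
    + exists ((b, i0) :: w'). split; [|split].
      * simpl. constructor; auto. destruct w' as [|g w'']; constructor.
        inversion Hf; subst. auto.
      * constructor; simpl; auto. eapply Forall_impl; [|exact Hf]. simpl. intros. lia.
      * simpl. exact (DescR_comp _ _ _ _ _ _ _ _ (rot_desc i0 b a c rest) HD).
Qed.
Lemma last_app_ne : forall (A : Type) (l1 l2 : list A) d, l2 <> [] -> last (l1 ++ l2) d = last l2 d.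
Proof.
  induction l1; simpl; intros; auto.
  rewrite IHl1 by auto. destruct l1; simpl; auto.
  destruct l2; [congruence|]. auto.
Qed.

Ltac znorm := repeat rewrite <- Z.add_assoc; simpl Z.add.

Lemma FixX : forall T k, exists Ss ls, length Ss = nleaves T /\ last Ss Leaf = Leaf /\
  refine (ev T k) Ss = ev (sp ls Leaf) k.
Proof.
  induction T as [|l IHl r IHr|l IHl r IHr]; intros k.
  - exists [Leaf], []. simpl. auto.
  - destruct (IHr (k+1)%Z) as [Ssr [lsr [H1 [H2 H3]]]].
    exists (repeat Leaf (nleaves l) ++ Ssr), (l :: lsr). split; [|split].
    + rewrite length_app, repeat_length. simpl. lia.
    + rewrite last_app_ne; auto. intro E. rewrite E in H1. simpl in H1. pose proof (nleaves_pos r). lia.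
    + simpl. rewrite refine_app by (rewrite repeat_length, length_ev; auto).
      rewrite refine_leaves_n by (apply length_ev). rewrite H3. auto.
  - destruct (IHr (k+2)%Z) as [Ssr [lsr [H1 [H2 H3]]]].
    assert (HSsr : Ssr <> []) by (intro E; rewrite E in H1; simpl in H1; pose proof (nleaves_pos r); lia).
    destruct l as [|a b|a b].
    + exists (NodeY Leaf Leaf :: Ssr), (Leaf :: Leaf :: lsr). split; [|split].
      * simpl. lia.
      * simpl. destruct Ssr; [congruence|]. auto.
      * simpl. rewrite H3. simpl. znorm. auto.
    + destruct (split_tree b (k + 1 + 1)%Z true) as [Rsb [Lb [Rb [HRL HRE]]]].
      exists (repeat Leaf (nleaves a) ++ Rsb ++ Ssr), (NodeY a Lb :: Rb :: lsr). split; [|split].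
      * rewrite !length_app, repeat_length. simpl. lia.
      * rewrite !last_app_ne; auto. intro E. apply app_eq_nil in E. tauto.
      * simpl. rewrite <- app_assoc.
        rewrite refine_app by (rewrite repeat_length, length_ev; auto).
        rewrite refine_leaves_n by (apply length_ev).
        rewrite refine_app by (rewrite HRL, length_ev; auto).
        rewrite HRE, H3. simpl in *. rewrite <- !app_assoc. znorm. auto.
    + exists (repeat Leaf (nleaves a) ++ repeat Leaf (nleaves b) ++ Ssr), (a :: b :: lsr).
      split; [|split].
      * rewrite !length_app, !repeat_length. simpl. lia.
      * rewrite !last_app_ne; auto. intro E. apply app_eq_nil in E. tauto.
      * simpl. rewrite <- app_assoc.
        rewrite refine_app by (rewrite repeat_length, length_ev; auto).
        rewrite refine_leaves_n by (apply length_ev).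
        rewrite refine_app by (rewrite repeat_length, length_ev; auto).
        rewrite refine_leaves_n by (apply length_ev).
        rewrite H3. simpl. znorm. auto.
Qed.

Lemma xsp_refine : forall ls k Rs, length Rs = nleaves (sp ls Leaf) -> last Rs Leaf = Leaf ->
  exists ls', ev (sp ls' Leaf) k = refine (ev (sp ls Leaf) k) Rs.
Proof.
  induction ls as [|l ls IH]; intros k Rs HL Hlast.
  - simpl in *. destruct Rs as [|R [|]]; simpl in *; try lia. subst. exists []. auto.
  - simpl in HL |- *.
    rewrite <- (firstn_skipn (nleaves l) Rs).
    rewrite refine_app by (rewrite length_ev, length_firstn; lia).
    destruct (RegRefine l (k+2)%Z (firstn (nleaves l) Rs)) as [l' Hl']. rewrite length_firstn; lia.
    destruct (IH (k+1)%Z (skipn (nleaves l) Rs)) as [ls' Hls'].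
    + rewrite length_skipn. lia.
    + assert (Hne : skipn (nleaves l) Rs <> []).
      { intro E. assert (length (skipn (nleaves l) Rs) = 0%nat) by (rewrite E; auto).
        rewrite length_skipn in H. pose proof (nleaves_pos (sp ls Leaf)). lia. }
      pose proof (last_app_ne _ (firstn (nleaves l) Rs) (skipn (nleaves l) Rs) Leaf Hne) as E.
      rewrite firstn_skipn in E. rewrite <- E. auto.
    + exists (l' :: ls'). simpl. rewrite Hl', Hls'. auto.
Qed.
Lemma fib_step : forall (a b : Z) j,
  IZR a * P j + IZR b * P (j+1) = IZR (a+b) * P (j+1) + IZR a * P (j+1+1).
Proof.
  intros. rewrite plus_IZR. pose proof (P_rec j).
  replace (j + 1 + 1)%Z with (j + 2)%Z by lia. nra.
Qed.

Definition mu (a b : Z) : nat :=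
  if Z.ltb a 0 then Z.to_nat (2 * (- a) + 1) else if Z.ltb b 0 then Z.to_nat (2 * (- b)) else 0%nat.

Lemma fib_nonneg : forall n a b j, (mu a b <= n)%nat -> 0 < IZR a * P j + IZR b * P (j+1) ->
  exists j' a' b', (0 <= a')%Z /\ (0 <= b')%Z /\
    IZR a * P j + IZR b * P (j+1) = IZR a' * P j' + IZR b' * P (j'+1).
Proof.
  induction n; intros a b j Hmu Hpos.
  - exists j, a, b. unfold mu in Hmu.
    destruct (Z.ltb_spec a 0); [lia|]. destruct (Z.ltb_spec b 0); [lia|]. auto.
  - assert (Hv : 0 < IZR a + IZR b * tau).
    { assert (P (j+1) = P j * tau) by (rewrite P_add, P_1; auto).
      rewrite H in Hpos. pose proof (P_pos j).
      apply (Rmult_lt_reg_l (P j)); auto. nra. }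
    pose proof tau_pos. pose proof tau_lt1.
    destruct (Z_lt_le_dec a 0) as [Ha|Ha]; [|destruct (Z_lt_le_dec b 0) as [Hb|Hb]].
    +
      assert (Hb : (0 < b)%Z).
      { destruct (Z_lt_le_dec 0 b); auto. apply IZR_le in l. apply IZR_lt in Ha. nra. }
      assert (Hab : (0 < a + b)%Z).
      { apply lt_IZR. rewrite plus_IZR. apply IZR_lt in Hb. apply IZR_lt in Ha. simpl in *. nra. }
      rewrite fib_step. rewrite fib_step in Hpos.
      apply (IHn (a+b)%Z a (j+1)%Z); auto.
      unfold mu in *. destruct (Z.ltb_spec a 0); [|lia]. destruct (Z.ltb_spec (a+b) 0); [lia|].
      destruct (Z.ltb_spec a 0); [|lia]. lia.
    +
      assert (Ha' : (0 < a)%Z).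
      { destruct (Z_lt_le_dec 0 a); auto. assert (a = 0%Z) by lia. subst. simpl in Hv.
        apply IZR_lt in Hb. simpl in Hb. nra. }
      rewrite fib_step. rewrite fib_step in Hpos.
      apply (IHn (a+b)%Z a (j+1)%Z); auto.
      unfold mu in *. destruct (Z.ltb_spec a 0); [lia|]. destruct (Z.ltb_spec b 0); [|lia].
      destruct (Z.ltb_spec (a+b) 0); lia.
    + exists j, a, b. auto.
Qed.

Lemma sumt_repeat : forall e n, sumt (repeat e n) = INR n * P e.
Proof. induction n; simpl; intros; [ring|]. rewrite IHn. destruct n; simpl; ring. Qed.

Lemma ZD : forall l, inZtau l -> 0 < l -> exists L, sumt L = l.
Proof.
  intros l [m [n Hl]] Hpos.
  assert (Hv : l = IZR m * P 0 + IZR n * P (0+1)) by (rewrite Hl, P_0; change (0+1)%Z with 1%Z; rewrite P_1; ring).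
  rewrite Hv in Hpos.
  destruct (fib_nonneg (mu m n) m n 0%Z (le_n _) Hpos) as [j [a [b [Ha [Hb He]]]]].
  exists (repeat j (Z.to_nat a) ++ repeat (j+1)%Z (Z.to_nat b)).
  rewrite sumt_app, !sumt_repeat, !INR_IZR_INZ, !Z2Nat.id by auto. rewrite Hv, He. ring.
Qed.

Lemma sumt_shift : forall k L, sumt (map (fun e => (k + e)%Z) L) = P k * sumt L.
Proof. induction L; simpl; [ring|]. rewrite IHL, P_add. ring. Qed.

Lemma DescR_affine : forall L f a k,
  (forall t, a <= t <= a + sumt L -> f t = f a + P k * (t - a)) ->
  DescR f a (f a) L (map (fun e => (k + e)%Z) L).
Proof.
  induction L as [|e L IH]; intros f a k H; simpl; auto.
  simpl in H. pose proof (sumt_nonneg L). pose proof (P_pos e).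
  split.
  - intros t Ht. replace (k + e - e)%Z with k by lia. apply H. lra.
  - replace (f a + P (k + e)) with (f (a + P e)).
    + apply IH. intros t Ht. rewrite H by lra. rewrite (H (a + P e)) by lra. ring.
    + rewrite H by lra. rewrite P_add. ring.
Qed.

Lemma pieces_desc : forall (f : R -> R) ks ps, length ps = S (length ks) ->
  (forall p, In p ps -> inZtau p) ->
  (forall i, (i < length ks)%nat ->
     nth i ps 0 < nth (S i) ps 0 /\
     forall t, nth i ps 0 <= t <= nth (S i) ps 0 ->
       f t = f (nth i ps 0) + powerRZ tau (nth i ks 0%Z) * (t - nth i ps 0)) ->
  exists es gs, DescR f (nth 0 ps 0) (f (nth 0 ps 0)) es gs /\
    sumt es = nth (length ks) ps 0 - nth 0 ps 0.
Proof.
  intros f ks. induction ks as [|k ks IH]; intros ps Hlen HZ Hp.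
  - exists [], []. simpl. split; auto. ring.
  - destruct ps as [|p0 [|p1 ps]]; simpl in Hlen; try lia.
    destruct (IH (p1 :: ps)) as [es' [gs' [HD' HS']]].
    + simpl. lia.
    + intros p Hin. apply HZ. simpl in *. tauto.
    + intros i Hi. apply (Hp (S i)). simpl. lia.
    + destruct (Hp 0%nat) as [Hlt Haff]; [simpl; lia|]. simpl in Hlt, Haff.
      assert (HZd : inZtau (p1 - p0)).
      { destruct (HZ p0) as [m0 [n0 E0]]; [simpl; auto|].
        destruct (HZ p1) as [m1 [n1 E1]]; [simpl; auto|].
        exists (m1 - m0)%Z, (n1 - n0)%Z. rewrite E0, E1, !minus_IZR. ring. }
      destruct (ZD (p1 - p0) HZd ltac:(lra)) as [L HL].
      exists (L ++ es'), (map (fun e => (k + e)%Z) L ++ gs'). simpl. split.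
      * apply DescR_app; [rewrite length_map; auto|]. split.
        -- apply DescR_affine. intros t Ht. apply Haff. lra.
        -- rewrite sumt_shift, HL.
           replace (p0 + (p1 - p0)) with p1 by ring.
           replace (f p0 + P k * (p1 - p0)) with (f p1); auto.
           rewrite Haff by lra. unfold P. ring.
      * rewrite sumt_app, HL, HS'. simpl. ring.
Qed.
Lemma sumt_gen : forall g, sumt (ev (gen_A (caret_of (fst g)) (snd g)) 0) = 1 /\
  sumt (ev (spine (snd g + 2)) 0) = 1.
Proof. intros. rewrite !sumt_ev, P_0. auto. Qed.

Lemma ev_ne : forall T k, ev T k <> [].
Proof. intros T k E. pose proof (length_ev T k). rewrite E in H. pose proof (nleaves_pos T). simpl in H. lia. Qed.

Lemma gen_range : forall g t, 0 <= t <= 1 -> 0 <= gen_fun g t <= 1.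
Proof.
  intros g t Ht. destruct (sumt_gen g) as [H1 H2].
  pose proof (DescR_range _ _ _ _ _ (gen_desc g) t) as H. rewrite H1, H2 in H.
  assert (0 <= gen_fun g t <= 0 + 1) by (apply H; [lra | apply ev_ne]). lra.
Qed.

Lemma gen_inv_gen : forall g t, 0 <= t <= 1 -> gen_inv_fun g (gen_fun g t) = t.
Proof.
  intros g t Ht. destruct (sumt_gen g) as [H1 H2].
  pose proof (DescR_comp _ _ _ _ _ _ _ _ (gen_desc g) (gen_inv_desc g)) as HC.
  pose proof (DescR_id (ev (gen_A (caret_of (fst g)) (snd g)) 0) 0) as HI.
  apply (DescR_uniq _ _ _ _ _ _ HC HI). rewrite H1. lra. apply ev_ne.
Qed.

Lemma apply_word_range : forall w t, 0 <= t <= 1 -> 0 <= apply_word w t <= 1.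
Proof. induction w; simpl; intros; auto. apply IHw. apply gen_range; auto. Qed.

Lemma apply_inv_word_app : forall l g x, apply_inv_word (l ++ [g]) x = gen_inv_fun g (apply_inv_word l x).
Proof. induction l; simpl; intros; auto. Qed.

Lemma inv_word : forall w t, 0 <= t <= 1 -> apply_inv_word (rev w) (apply_word w t) = t.
Proof.
  induction w as [|g w IH]; simpl; intros; auto.
  rewrite apply_inv_word_app, IH by (apply gen_range; auto). apply gen_inv_gen; auto.
Qed.

Theorem mainTheorem12 :
  forall f : R -> R, in_Ftau f ->
  exists (as_ bs : list letter),
    Sorted le (map snd as_) /\ Sorted le (map snd bs) /\
    forall t, 0 <= t <= 1 ->
      f t = apply_inv_word (rev bs) (apply_word as_ t).
Proof.
  intros f [ps [ks [Hlen [H0 [H1 [HZ [Hp [Hf0 Hf1]]]]]]]].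
  destruct (pieces_desc f ks ps Hlen HZ Hp) as [es [gs [HD HS]]].
  rewrite H0, H1, Hf0 in *. replace (1 - 0) with 1 in HS by ring.
  assert (Hes : es <> []) by (intro E; rewrite E in HS; simpl in HS; lra).
  assert (Hgs : sumt gs = 1).
  { pose proof (DescR_end _ _ _ _ _ HD Hes). rewrite HS in H. rewrite Rplus_0_l in H.
    rewrite Hf1 in H. lra. }
  assert (HLeg := DescR_len _ _ _ _ _ HD).
  destruct (L5 0 es ltac:(rewrite HS, P_0; auto)) as [T1 [Ss [HSs HT1]]].
  assert (HD1 := DescR_refine _ _ _ Ss _ _ HD HSs).
  rewrite <- HT1 in HD1.
  destruct (L5 0 (refine gs Ss)) as [T2 [Rs [HRs HT2]]].
  { rewrite sumt_refine by lia. rewrite Hgs, P_0. auto. }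
  assert (HL1 := DescR_len _ _ _ _ _ HD1).
  assert (HD2 := DescR_refine _ _ _ Rs _ _ HD1 ltac:(lia)).
  rewrite <- HT2 in HD2.
  destruct (RegRefine T1 0 Rs) as [T1' HT1'].
  { rewrite <- (length_ev T1 0). lia. }
  rewrite <- HT1' in HD2.
  assert (HL2 := DescR_len _ _ _ _ _ HD2).
  destruct (FixX T1' 0) as [Ss1 [ls1 [HSs1 [_ HX1]]]].
  assert (HD3 := DescR_refine _ _ _ Ss1 _ _ HD2 ltac:(rewrite length_ev; auto)).
  rewrite HX1 in HD3.
  destruct (RegRefine T2 0 Ss1) as [T2' HT2'].
  { rewrite <- (length_ev T2 0), <- HL2, length_ev. auto. }
  rewrite <- HT2' in HD3.
  assert (HL3 := DescR_len _ _ _ _ _ HD3).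
  destruct (FixX T2' 0) as [Ss2 [ls2 [HSs2 [Hlast HX2]]]].
  assert (HD4 := DescR_refine _ _ _ Ss2 _ _ HD3 ltac:(rewrite HL3, length_ev; auto)).
  rewrite HX2 in HD4.
  destruct (xsp_refine ls1 0 Ss2) as [ls1' Hls1'].
  { rewrite HSs2, <- (length_ev T2' 0), <- HL3, length_ev. auto. }
  { auto. }
  rewrite <- Hls1' in HD4.
  assert (HL4 := DescR_len _ _ _ _ _ HD4). rewrite !length_ev in HL4.
  destruct (nleaves (sp ls1' Leaf)) as [|M] eqn:EM.
  { pose proof (nleaves_pos (sp ls1' Leaf)). lia. }
  destruct (PW (ncars ls1') ls1' 0 (le_n _) ltac:(intros; lia) M EM) as [as_ [Has [_ HPa]]].
  destruct (PW (ncars ls2) ls2 0 (le_n _) ltac:(intros; lia) M ltac:(lia)) as [bs [Hbs [_ HPb]]].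
  exists as_, bs. split; [auto|split; [auto|]].
  intros t Ht.
  assert (HC := DescR_comp _ _ _ _ _ _ _ _ HD4 HPb).
  assert (Hu : apply_word bs (f t) = apply_word as_ t).
  { apply (DescR_uniq _ _ _ _ _ _ HC HPa). rewrite sumt_ev, P_0. lra. apply ev_ne. }
  assert (Hft : 0 <= f t <= 1).
  { pose proof (DescR_range _ _ _ _ _ HD4 t) as HR. rewrite !sumt_ev, P_0 in HR.
    assert (0 <= f t <= 0 + 1) by (apply HR; [lra | apply ev_ne]). lra. }
  rewrite <- Hu. symmetry. apply inv_word. auto.
Qed.
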